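(* For every integer $a\geq 2$, $$\sigma(2a-1,2)=-a\,2^{2a-1}\lambda(2a+1)+\frac{2^{2a-1}(2a+1)}{3}\lambda(2)\lambda(2a-1)+\sum_{j=1}^{a-2}j\,2^{2j}\lambda(2j+1)\zeta(2a-2j),$$ where an empty sum equals $0$.
   Context: For integers $t\geq 1$ and $n\geq 1$ let $S_n^{(t)}=\sum_{k=1}^{n}\frac{1}{(2k-1)^t}$, and for integers $s\geq 2$, $t\geq 1$ let $\sigma(s,t)=\sum_{n\geq 1}\frac{S_n^{(t)}}{n^s}$. For real $s>1$, $\lambda(s)=\sum_{n\geq 1}\frac{1}{(2n-1)^s}=(1-2^{-s})\zeta(s)$, and $\zeta$ is the Riemann zeta function. *)

(* Defs.v *)
From Stdlib Require Import Reals.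
From Coquelicot Require Import Coquelicot.
Open Scope R_scope.

Definition zeta_R (s : nat) : R := Series (fun k : nat => / (INR (k + 1)) ^ s).

Definition lambda_odd (s : nat) : R := Series (fun k : nat => / (INR (2 * k + 1)) ^ s).

(* S_n^{(t)} = sum_{k=1}^n 1/(2k-1)^t ; sum over k=0..n-1 of 1/(2k+1)^t. *)
Definition Sodd (t n : nat) : R :=
  match n with
  | O => 0
  | Datatypes.S m => sum_n (fun k : nat => / (INR (2 * k + 1)) ^ t) m
  end.

Definition sigma_odd (s t : nat) : R := Series (fun k : nat => Sodd t (k + 1) / (INR (k + 1)) ^ s).

(* Main.v *)
Require Import Defs.
From Stdlib Require Import Reals Lra Lia.
From Coquelicot Require Import Coquelicot.
Open Scope R_scope.


Lemma ser_lim (a : nat -> R) (l : R) : is_series a l -> is_lim_seq (sum_n a) l.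
Proof.
  intros H. apply is_lim_seq_Reals. apply is_series_Reals in H.
  intros e He. destruct (H e He) as [N HN]. exists N. intros n Hn.
  rewrite sum_n_Reals. now apply HN.
Qed.

Lemma lim_ser (a : nat -> R) (l : R) : is_lim_seq (sum_n a) l -> is_series a l.
Proof.
  intros H. apply is_series_Reals. pose proof (proj1 (is_lim_seq_Reals (fun n => sum_n a n) l) H) as H'. clear H; rename H' into H.
  intros e He. destruct (H e He) as [N HN]. exists N. intros n Hn.
  rewrite <- sum_n_Reals. now apply HN.
Qed.

Lemma isR_plus (a b : nat -> R) (la lb : R) : is_series a la -> is_series b lb ->
  is_series (fun n => a n + b n) (la + lb).
Proof. intros. now apply (is_series_plus a b). Qed.

Lemma isR_minus (a b : nat -> R) (la lb : R) : is_series a la -> is_series b lb ->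
  is_series (fun n => a n - b n) (la - lb).
Proof. intros. now apply (is_series_minus a b). Qed.

Lemma isR_scal (c : R) (a : nat -> R) (la : R) : is_series a la -> is_series (fun n => c * a n) (c * la).
Proof. intros. now apply (is_series_scal c a). Qed.

Lemma isR_ext (a b : nat -> R) (l : R) : (forall n, a n = b n) -> is_series a l -> is_series b l.
Proof. intros. now apply (is_series_ext a b). Qed.

Lemma isR_eq (a : nat -> R) (l l' : R) : l = l' -> is_series a l -> is_series a l'.
Proof. intros ->; auto. Qed.

Lemma isR_shift (a : nat -> R) (l : R) : is_series a l -> is_series (fun k => a (S k)) (l - a 0%nat).
Proof. intros H. apply is_series_incr_1. 
match goal with |- is_series _ ?x => replace x with l end. exact H. unfold plus; simpl; ring. Qed.
Lemma isR_unshift (a : nat -> R) (l : R) : is_series (fun k => a (S k)) l -> is_series a (l + a 0%nat).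
Proof. intros H. apply is_series_decr_1. 
match goal with |- is_series _ ?x => replace x with l end. exact H. unfold plus, opp; simpl; ring. Qed.

Lemma isR_zero : is_series (fun _ : nat => 0) 0.
Proof. apply lim_ser. apply is_lim_seq_ext with (fun _ => 0).
  intros n; induction n. now rewrite sum_O. rewrite sum_Sn, <- IHn. change plus with Rplus; simpl; ring.
  apply is_lim_seq_const. Qed.

Lemma isR_fin (f : nat -> nat -> R) (F : nat -> R) K :
  (forall i, is_series (f i) (F i)) ->
  is_series (fun n => sum_n (fun i => f i n) K) (sum_n F K).
Proof.
  intros H. induction K.
  - rewrite sum_O. apply isR_ext with (f 0%nat). intros; now rewrite sum_O. auto.
  - rewrite sum_Sn. apply isR_ext with (fun n => sum_n (fun i => f i n) K + f (S K) n).
    intros; now rewrite sum_Sn. now apply isR_plus.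
Qed.

Lemma sum_n_mono (u v : nat -> R) N : (forall n, u n <= v n) -> sum_n u N <= sum_n v N.
Proof. intros H; induction N. rewrite !sum_O; auto. rewrite !sum_Sn; change plus with Rplus; simpl.
  specialize (H (S N)); lra. Qed.

Lemma sum_n_nonneg (u : nat -> R) N : (forall n, 0 <= u n) -> 0 <= sum_n u N.
Proof. intros H; induction N. rewrite !sum_O; auto. rewrite !sum_Sn; change plus with Rplus; simpl.
  specialize (H (S N)); lra. Qed.

Lemma ps_le (u : nat -> R) (U : R) N : (forall n, 0 <= u n) -> is_series u U -> sum_n u N <= U.
Proof.
  intros H0 H. apply is_series_Reals in H. rewrite sum_n_Reals.
  apply growing_ineq; auto. intros n; simpl; specialize (H0 (S n)); lra.
Qed.

Lemma ser_le (u v : nat -> R) (U V : R) : (forall n, u n <= v n) -> is_series u U -> is_series v V -> U <= V.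
Proof.
  intros H Hu Hv. apply ser_lim in Hu; apply ser_lim in Hv.
  assert (Rbar_le U V). { apply (is_lim_seq_le _ _ _ _ (fun n => sum_n_mono u v n H) Hu Hv). }
  simpl in H0; auto.
Qed.

Lemma ser_nonneg (u : nat -> R) (U : R) : (forall n, 0 <= u n) -> is_series u U -> 0 <= U.
Proof. intros H Hu. apply (ser_le (fun _ => 0) u); auto. apply isR_zero. Qed.

Lemma tonelli_bound (a : nat -> nat -> R) (b c : nat -> R) (B : R) :
  (forall m n, 0 <= a m n) ->
  (forall m, is_series (fun n => a m n) (b m)) ->
  (forall n, is_series (fun m => a m n) (c n)) ->
  is_series b B -> forall N, sum_n c N <= B.
Proof.
  intros Hp Hb Hc HB N.
  assert (H1 : is_series (fun m => sum_n (fun n => a m n) N) (sum_n c N)).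
  { apply (isR_fin (fun n m => a m n)). auto. }
  apply (ser_le _ _ _ _ (fun m => ps_le (fun n => a m n) (b m) N (Hp m) (Hb m)) H1 HB).
Qed.

Lemma tonelli (a : nat -> nat -> R) (b c : nat -> R) (B : R) :
  (forall m n, 0 <= a m n) ->
  (forall m, is_series (fun n => a m n) (b m)) ->
  (forall n, is_series (fun m => a m n) (c n)) ->
  is_series b B -> is_series c B.
Proof.
  intros Hp Hb Hc HB.
  assert (Hc0 : forall n, 0 <= c n).
  { intros n. apply (ser_nonneg _ _ (fun m => Hp m n) (Hc n)). }
  assert (Hb0 : forall n, 0 <= b n).
  { intros n. apply (ser_nonneg _ _ (fun m => Hp n m) (Hb n)). }
  pose proof (tonelli_bound a b c B Hp Hb Hc HB) as Hbd.
  destruct (ex_finite_lim_seq_incr (sum_n c) B) as [C HC]; auto.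
  { intros n. rewrite sum_Sn. change plus with Rplus; simpl. specialize (Hc0 (S n)); lra. }
  apply lim_ser in HC.
  assert (C <= B). { apply ser_lim in HC. apply ser_lim in HB.
    assert (Rbar_le C B). apply (is_lim_seq_le (sum_n c) (fun _ => B)); auto. apply is_lim_seq_const.
    auto. }
  assert (B <= C). {
    pose proof (tonelli_bound (fun n m => a m n) c b C (fun m n => Hp n m) Hc Hb HC) as Hbd2.
    apply ser_lim in HC. apply ser_lim in HB.
    assert (Rbar_le B C). apply (is_lim_seq_le (sum_n b) (fun _ => C)); auto. apply is_lim_seq_const.
    auto. }
  replace B with C by lra. auto.
Qed.


Lemma tel1 (v : nat -> R) : is_lim_seq v 0 -> is_series (fun n => v n - v (S n)) (v 0%nat).
Proof.
  intros H. apply lim_ser.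
  apply is_lim_seq_ext with (fun n => v 0%nat - v (S n)).
  { intros n; induction n. rewrite sum_O; auto. rewrite sum_Sn, <- IHn. unfold plus; simpl; ring. }
  replace (Finite (v 0%nat)) with (Rbar_minus (v 0%nat) 0) by (simpl; f_equal; ring).
  apply is_lim_seq_minus'. apply is_lim_seq_const. now apply is_lim_seq_incr_1 in H.
Qed.

Lemma telN (v : nat -> R) : is_lim_seq v 0 -> forall K,
  is_series (fun n => v n - v (n + S K)%nat) (sum_n v K).
Proof.
  intros H K. induction K.
  - rewrite sum_O. apply isR_ext with (fun n => v n - v (S n)). intros; f_equal; f_equal; lia.
    now apply tel1.
  - rewrite sum_Sn. apply isR_ext with (fun n => (v n - v (n + S K)%nat) + (v (n + S K)%nat - v (S (n + S K)))).
    { intros n. replace (n + S (S K))%nat with (S (n + S K)) by lia. ring. }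
    change (plus (sum_n v K) (v (S K))) with (sum_n v K + v (S K)).
    apply isR_plus; auto.
    apply (tel1 (fun n => v (n + S K)%nat)).
    apply is_lim_seq_incr_n with (N := S K) in H. exact H.
Qed.

Lemma INR_pos1 k : 0 < INR (k + 1).
Proof. apply lt_0_INR; lia. Qed.

Lemma lim_inv_lin (c : R) : is_lim_seq (fun n => / (2 * INR n + c)) 0.
Proof.
  replace (Finite 0) with (Rbar_inv p_infty) by reflexivity.
  apply is_lim_seq_inv; [| discriminate].
  eapply is_lim_seq_plus. 
  apply is_lim_seq_scal_l. apply is_lim_seq_INR. apply is_lim_seq_const.
  simpl. destruct (Rle_dec 0 2) as [r|r]; [| lra]. destruct (Rle_lt_or_eq_dec 0 2 r); [| lra].
  unfold is_Rbar_plus; simpl; reflexivity.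
Qed.

Lemma ex_series_inv2 : ex_series (fun k => / INR (k + 1) ^ 2).
Proof.
  apply (@ex_series_le R_AbsRing R_CompleteNormedModule) with (fun k => 2 * (/ (2 * INR k + 2) * 2) - 2 * (/ (2 * INR (S k) + 2) * 2)).
  - intros n. rewrite S_INR, plus_INR. simpl. pose proof (pos_INR n).
    unfold norm; simpl; unfold abs; simpl. rewrite Rabs_pos_eq.
    2:{ apply Rlt_le, Rinv_0_lt_compat. nra. }
    replace (2 * (/ (2 * INR n + 2) * 2) - 2 * (/ (2 * (INR n + 1) + 2) * 2))
      with (/ ((INR n + 1) * (INR n + 2) / 2)) by (field; lra).
    rewrite Rmult_1_r. apply Rinv_le_contravar. nra. nra.
  - exists (2 * (/ (2 * INR 0 + 2) * 2)).
    apply (tel1 (fun k => 2 * (/ (2 * INR k + 2) * 2))).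
    replace (Finite 0) with (Rbar_mult 2 (Rbar_mult 0 2)) by (simpl; f_equal; ring).
    apply is_lim_seq_scal_l. apply is_lim_seq_scal_r. apply lim_inv_lin.
Qed.

Lemma pow_inv_le2 (x : R) (s : nat) : 1 <= x -> (2 <= s)%nat -> / x ^ s <= / x ^ 2.
Proof.
  intros Hx Hs. apply Rinv_le_contravar. apply pow_lt; lra.
  apply Rle_pow; auto.
Qed.

Lemma ex_zeta (s : nat) : (2 <= s)%nat -> ex_series (fun k => / INR (k + 1) ^ s).
Proof.
  intros Hs. apply (@ex_series_le R_AbsRing R_CompleteNormedModule) with (fun k => / INR (k + 1) ^ 2).
  2: apply ex_series_inv2.
  intros n. unfold norm; simpl; unfold abs; simpl. rewrite Rabs_pos_eq.
  apply pow_inv_le2; auto. rewrite plus_INR; simpl; pose proof (pos_INR n); lra.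
  apply Rlt_le, Rinv_0_lt_compat, pow_lt, INR_pos1.
Qed.

Lemma ex_lam (s : nat) : (2 <= s)%nat -> ex_series (fun k => / INR (2 * k + 1) ^ s).
Proof.
  intros Hs. apply (@ex_series_le R_AbsRing R_CompleteNormedModule) with (fun k => / INR (k + 1) ^ s).
  2: now apply ex_zeta.
  intros n. unfold norm; simpl; unfold abs; simpl. rewrite Rabs_pos_eq.
  apply Rinv_le_contravar. apply pow_lt, INR_pos1. apply pow_incr. split. apply Rlt_le, INR_pos1.
  apply le_INR; lia.
  apply Rlt_le, Rinv_0_lt_compat, pow_lt. apply lt_0_INR; lia.
Qed.

Lemma is_zeta (s : nat) : (2 <= s)%nat -> is_series (fun k => / INR (k + 1) ^ s) (zeta_R s).
Proof. intros; apply Series_correct, ex_zeta; auto. Qed.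

Lemma is_lam (s : nat) : (2 <= s)%nat -> is_series (fun k => / INR (2 * k + 1) ^ s) (lambda_odd s).
Proof. intros; apply Series_correct, ex_lam; auto. Qed.

Lemma zeta2_lam2 : zeta_R 2 = 4 / 3 * lambda_odd 2.
Proof.
  set (z := fun k : nat => / INR (k + 1) ^ 2).
  set (h := fun k : nat => / INR (2 * k + 1) ^ 2).
  assert (E : forall N, sum_n z (2 * N + 1) = sum_n (fun k => h k + / 4 * z k) N).
  { induction N.
    - simpl. rewrite sum_Sn, !sum_O. unfold z, h, plus; simpl. field.
    - replace (2 * S N + 1)%nat with (S (S (2 * N + 1))) by lia.
      rewrite !sum_Sn, IHN. unfold z, h.
      assert (A1: INR (S (S (2 * N + 1)) + 1) = 2 * INR N + 4) by (repeat (rewrite ?S_INR, ?plus_INR, ?mult_INR); simpl; ring).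
      assert (A2: INR (S (2 * N + 1) + 1) = 2 * INR N + 3) by (repeat (rewrite ?S_INR, ?plus_INR, ?mult_INR); simpl; ring).
      assert (A3: INR (2 * S N + 1) = 2 * INR N + 3) by (repeat (rewrite ?S_INR, ?plus_INR, ?mult_INR); simpl; ring).
      assert (A4: INR (S N + 1) = INR N + 2) by (repeat (rewrite ?S_INR, ?plus_INR, ?mult_INR); simpl; ring).
      rewrite A1, A2, A3, A4. pose proof (pos_INR N).
      unfold plus; simpl. field. lra. }
  assert (H1 : is_lim_seq (fun N => sum_n z (2 * N + 1)) (zeta_R 2)).
  { apply (is_lim_seq_subseq (sum_n z) (zeta_R 2) (fun N => 2 * N + 1)%nat).
    apply eventually_subseq. intros; lia. apply ser_lim, is_zeta; lia. }
  assert (H2 : is_lim_seq (fun N => sum_n z (2 * N + 1)) (lambda_odd 2 + / 4 * zeta_R 2)).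
  { apply is_lim_seq_ext with (sum_n (fun k => h k + / 4 * z k)). intros; now rewrite E.
    apply ser_lim. apply isR_plus. apply is_lam; lia. apply isR_scal, is_zeta; lia. }
  apply is_lim_seq_unique in H1. apply is_lim_seq_unique in H2. rewrite H1 in H2.
  injection H2; intros; lra.
Qed.

Ltac inr := repeat (rewrite ?S_INR, ?plus_INR, ?mult_INR); simpl.

Lemma Sodd_S (t n : nat) : Sodd t (S n) = Sodd t n + / INR (2 * n + 1) ^ t.
Proof.
  destruct n. unfold Sodd. rewrite sum_O, Rplus_0_l. reflexivity.
  unfold Sodd. rewrite sum_Sn. reflexivity.
Qed.

Lemma oddne (k n : nat) : 2 * INR k + 1 - 2 * INR n <> 0.
Proof.
  intros H. assert (INR (2 * k + 1) = INR (2 * n)) by (inr; lra).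
  apply INR_eq in H0. lia.
Qed.

Lemma Qser (n : nat) : is_series (fun k => / (2 * INR k + 1 - 2 * INR n) ^ 2) (lambda_odd 2 + Sodd 2 n).
Proof.
  induction n.
  - simpl Sodd. rewrite Rplus_0_r. apply isR_ext with (fun k => / INR (2 * k + 1) ^ 2).
    intros k. f_equal. f_equal. inr. ring. apply is_lam; lia.
  - rewrite Sodd_S. rewrite <- Rplus_assoc.
    replace (/ INR (2 * n + 1) ^ 2) with (/ (2 * INR 0 + 1 - 2 * INR (S n)) ^ 2).
    2:{ f_equal. inr. ring. }
    apply (isR_unshift (fun k => / (2 * INR k + 1 - 2 * INR (S n)) ^ 2)).
    apply isR_ext with (fun k => / (2 * INR k + 1 - 2 * INR n) ^ 2); auto.
    intros k. f_equal. inr. ring.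
Qed.

Lemma Rser (n : nat) : is_series (fun k => / INR (2 * (k + n) + 1) ^ 2) (lambda_odd 2 - Sodd 2 n).
Proof.
  induction n.
  - simpl Sodd. rewrite Rminus_0_r. apply isR_ext with (fun k => / INR (2 * k + 1) ^ 2).
    intros k. f_equal. f_equal. f_equal. lia. apply is_lam; lia.
  - rewrite Sodd_S. apply isR_ext with (fun k => / INR (2 * (S k + n) + 1) ^ 2).
    intros k. f_equal. f_equal. f_equal. lia.
    replace (lambda_odd 2 - (Sodd 2 n + / INR (2 * n + 1) ^ 2)) with
      (lambda_odd 2 - Sodd 2 n - / INR (2 * (0 + n) + 1) ^ 2) by (simpl; ring).
    apply (isR_shift (fun k => / INR (2 * (k + n) + 1) ^ 2)). auto.
Qed.

Definition T (p k n : nat) : R :=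
  4 * INR (2 * k + 1) / (INR (n + 1) ^ p * (INR (2 * k + 1) ^ 2 - 4 * INR (n + 1) ^ 2) ^ 2).

Lemma T_nonneg p k n : 0 <= T p k n.
Proof.
  unfold T. apply Rmult_le_pos. apply Rmult_le_pos. lra. apply pos_INR.
  apply Rlt_le, Rinv_0_lt_compat. apply Rmult_lt_0_compat. apply pow_lt, INR_pos1.
  assert (INR (2 * k + 1) ^ 2 - 4 * INR (n + 1) ^ 2 <> 0).
  { pose proof (oddne k (n + 1)). intros E. apply H.
    assert (E2 : (INR (2 * k + 1) - 2 * INR (n + 1)) * (INR (2 * k + 1) + 2 * INR (n + 1)) = 0) by (rewrite <- E; ring).
    apply Rmult_integral in E2. destruct E2 as [E2|E2].
    rewrite <- E2. inr. ring.
    exfalso. pose proof (pos_INR k). pose proof (pos_INR n). revert E2. inr. lra. }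
  pose proof (Rsqr_pos_lt _ H). unfold Rsqr in H0. nra.
Qed.

Lemma T_n (p n : nat) : is_series (fun k => T p k n) (Sodd 2 (n + 1) / INR (n + 1) ^ (p + 1)).
Proof.
  set (N := INR (n + 1)).
  assert (HN : 0 < N) by apply INR_pos1.
  apply isR_ext with (fun k => / (2 * N ^ (p + 1)) *
     (/ (2 * INR k + 1 - 2 * INR (n + 1)) ^ 2 - / INR (2 * (k + (n + 1)) + 1) ^ 2)).
  - intros k. unfold T. fold N.
    assert (Hm : INR (2 * k + 1) = 2 * INR k + 1) by (inr; ring).
    assert (Hm2 : INR (2 * (k + (n + 1)) + 1) = 2 * INR k + 1 + 2 * N) by (unfold N; inr; ring).
    rewrite Hm2, Hm. pose proof (oddne k (n + 1)). fold N in H.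
    pose proof (pos_INR k).
    assert (HD : (2 * INR k + 1) ^ 2 - 4 * N ^ 2 <> 0).
    { intros E. apply H.
      assert (E2 : (2 * INR k + 1 - 2 * N) * (2 * INR k + 1 + 2 * N) = 0) by (rewrite <- E; ring).
      apply Rmult_integral in E2. destruct E2 as [E2|E2]; lra. }
    assert (HNp : N ^ p <> 0) by (apply pow_nonzero; lra).
    assert (HP : 2 * INR k + 1 + 2 * N <> 0) by lra.
    rewrite pow_add, pow_1. field. repeat split; auto; lra.
  - replace (Sodd 2 (n + 1) / N ^ (p + 1)) with
      (/ (2 * N ^ (p + 1)) * ((lambda_odd 2 + Sodd 2 (n + 1)) - (lambda_odd 2 - Sodd 2 (n + 1)))).
    2:{ field. apply pow_nonzero; lra. }
    apply isR_scal. apply isR_minus. apply Qser. apply Rser.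
Qed.


Lemma sum_n_mult_r (f : nat -> R) (c : R) N : sum_n (fun i => f i * c) N = sum_n f N * c.
Proof. induction N. now rewrite !sum_O. rewrite !sum_Sn, IHN. unfold plus; simpl; ring. Qed.

Lemma sum_n_extR (f g : nat -> R) N : (forall i, f i = g i) -> sum_n f N = sum_n g N.
Proof. intros H. induction N. now rewrite !sum_O. rewrite !sum_Sn, IHN, H. reflexivity. Qed.

Lemma sum_SnR (f : nat -> R) N : sum_n f (S N) = sum_n f N + f (S N).
Proof. rewrite sum_Sn. reflexivity. Qed.

Definition fterm (x y : R) (b i : nat) : R :=
  if (1 <=? i)%nat then INR i * 2 ^ (2 * i) * / x ^ (2 * i + 1) * ((y ^ 2) ^ i / (y ^ 2) ^ (S b)) else 0.

Lemma pf (x y : R) (b : nat) : x <> 0 -> y <> 0 -> 2 * y - x <> 0 -> 2 * y + x <> 0 ->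
  4 * x / (y ^ (2 * b) * (x ^ 2 - 4 * y ^ 2) ^ 2) =
  sum_n (fterm x y b) b
  + 2 ^ (2 * b) * / x ^ (2 * b + 1) * (/ (2 * y - x) ^ 2 + / (2 * y + x) ^ 2)
  + (1 - 2 * INR (S b)) * 2 ^ (2 * b) * / x ^ (2 * b + 2) * (/ (2 * y - x) - / (2 * y + x)).
Proof.
  intros Hx Hy H1 H2.
  assert (HD : x ^ 2 - 4 * y ^ 2 <> 0).
  { intros E. assert (E2 : (2 * y - x) * (2 * y + x) = - (x ^ 2 - 4 * y ^ 2)) by ring.
    rewrite E, Ropp_0 in E2. apply Rmult_integral in E2; tauto. }
  induction b.
  - rewrite sum_O. unfold fterm; simpl. field. repeat split; auto. intro E; apply HD; rewrite <- E; ring.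
  - rewrite sum_SnR.
    rewrite (sum_n_extR (fterm x y (S b)) (fun i => fterm x y b i * / y ^ 2)).
    2:{ intros i. unfold fterm. destruct (1 <=? i)%nat; [| ring].
        change ((y ^ 2) ^ S (S b)) with (y ^ 2 * (y ^ 2) ^ S b). field. repeat split; repeat apply pow_nonzero; auto. }
    rewrite sum_n_mult_r.
    replace (4 * x / (y ^ (2 * S b) * (x ^ 2 - 4 * y ^ 2) ^ 2)) with
      (4 * x / (y ^ (2 * b) * (x ^ 2 - 4 * y ^ 2) ^ 2) * / y ^ 2).
    2:{ replace (2 * S b)%nat with (2 * b + 2)%nat by lia. rewrite pow_add. field.
        repeat split; auto. apply pow_nonzero; auto. }
    rewrite IHb. unfold fterm. replace (1 <=? S b)%nat with true by reflexivity.
    set (X := x ^ (2 * b)). set (Q := 2 ^ (2 * b)).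
    replace (x ^ (2 * b + 1)) with (X * x) by (unfold X; rewrite pow_add; ring).
    replace (x ^ (2 * b + 2)) with (X * x ^ 2) by (unfold X; rewrite pow_add; ring).
    replace (x ^ (2 * S b + 1)) with (X * x ^ 3) by (unfold X; rewrite <- pow_add; f_equal; lia).
    replace (x ^ (2 * S b + 2)) with (X * x ^ 4) by (unfold X; rewrite <- pow_add; f_equal; lia).
    replace (2 ^ (2 * S b)) with (Q * 4) by (unfold Q; replace (2 * S b)%nat with (2 * b + 2)%nat by lia; rewrite pow_add; ring).
    replace ((y ^ 2) ^ S (S b)) with ((y ^ 2) ^ S b * y ^ 2) by (simpl; ring).
    assert (HX : X <> 0) by (apply pow_nonzero; auto).
    assert (HY : (y ^ 2) ^ S b <> 0) by (apply pow_nonzero, pow_nonzero; auto).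
    rewrite !S_INR. set (SS := sum_n _ b). field. repeat split; auto.
Qed.

Lemma isR_fin' (f : nat -> nat -> R) (F : nat -> R) K :
  (forall i, (i <= K)%nat -> is_series (f i) (F i)) ->
  is_series (fun n => sum_n (fun i => f i n) K) (sum_n F K).
Proof.
  intros H. induction K.
  - rewrite sum_O. apply isR_ext with (f 0%nat). intros; now rewrite sum_O. apply H; lia.
  - rewrite sum_SnR. apply isR_ext with (fun n => sum_n (fun i => f i n) K + f (S K) n).
    intros; now rewrite sum_SnR. apply isR_plus. apply IHK; intros; apply H; lia. apply H; lia.
Qed.

Lemma sum_n_shift (f : nat -> R) N : (sum_n f (S N) : R) = f 0%nat + sum_n (fun i => f (S i)) N.
Proof.
  induction N. rewrite sum_SnR, !sum_O. reflexivity.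
  rewrite sum_SnR, IHN, (sum_SnR (fun i => f (S i))). ring.
Qed.

Lemma G_sum (k : nat) : sum_n (fun i => / (2 * INR i + 1 - 2 * INR k)) (2 * k) = / INR (2 * k + 1).
Proof.
  induction k.
  - simpl. rewrite sum_O. simpl. f_equal. ring.
  - replace (2 * S k)%nat with (S (S (2 * k))) by lia.
    rewrite sum_n_shift.
    rewrite (sum_n_extR _ (fun i => / (2 * INR i + 1 - 2 * INR k))).
    2:{ intros i. f_equal. inr. ring. }
    rewrite sum_SnR, IHk. inr. pose proof (pos_INR k).
    field. repeat split; lra.
Qed.

Lemma P1ser (k : nat) : is_series (fun n => / (2 * INR (n + 1) - INR (2 * k + 1)) - / (2 * INR (n + 1) + INR (2 * k + 1)))
  (/ INR (2 * k + 1)).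
Proof.
  set (v := fun n : nat => / (2 * INR n + 1 - 2 * INR k)).
  apply isR_ext with (fun n => v n - v (n + S (2 * k))%nat).
  { intros n. unfold v. f_equal; f_equal; inr; ring. }
  rewrite <- G_sum. apply telN.
  apply is_lim_seq_ext with (fun n => / (2 * INR n + (1 - 2 * INR k))).
  intros n; unfold v; f_equal; ring. apply lim_inv_lin.
Qed.

Lemma P2ser (k : nat) : is_series (fun n => / (2 * INR (n + 1) - INR (2 * k + 1)) ^ 2 + / (2 * INR (n + 1) + INR (2 * k + 1)) ^ 2)
  (2 * lambda_odd 2 - / INR (2 * k + 1) ^ 2).
Proof.
  replace (2 * lambda_odd 2 - / INR (2 * k + 1) ^ 2) with
    ((lambda_odd 2 + Sodd 2 k) + (lambda_odd 2 - Sodd 2 (k + 1))).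
  2:{ replace (k + 1)%nat with (S k) by lia. rewrite Sodd_S. ring. }
  apply isR_plus.
  - apply isR_ext with (fun n => / (2 * INR n + 1 - 2 * INR k) ^ 2). intros n. f_equal. f_equal. inr. ring.
    apply Qser.
  - apply isR_ext with (fun n => / INR (2 * (n + (k + 1)) + 1) ^ 2). intros n. f_equal. f_equal. inr. ring.
    apply Rser.
Qed.

Definition Bm (b k : nat) : R :=
  sum_n (fun i => if (1 <=? i)%nat then INR i * 2 ^ (2 * i) * / INR (2 * k + 1) ^ (2 * i + 1) * zeta_R (2 * S b - 2 * i) else 0) b
  + 2 ^ (2 * b) * / INR (2 * k + 1) ^ (2 * b + 1) * (2 * lambda_odd 2 - / INR (2 * k + 1) ^ 2)
  + (1 - 2 * INR (S b)) * 2 ^ (2 * b) * / INR (2 * k + 1) ^ (2 * b + 2) * / INR (2 * k + 1).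

Lemma T_m (b k : nat) : is_series (fun n => T (2 * b) k n) (Bm b k).
Proof.
  set (m := INR (2 * k + 1)).
  assert (Hm : 0 < m) by (unfold m; apply lt_0_INR; lia).
  apply isR_ext with (fun n => sum_n (fterm m (INR (n + 1)) b) b
    + 2 ^ (2 * b) * / m ^ (2 * b + 1) * (/ (2 * INR (n + 1) - m) ^ 2 + / (2 * INR (n + 1) + m) ^ 2)
    + (1 - 2 * INR (S b)) * 2 ^ (2 * b) * / m ^ (2 * b + 2) * (/ (2 * INR (n + 1) - m) - / (2 * INR (n + 1) + m))).
  { intros n. unfold T. fold m. symmetry. apply pf.
    - lra.
    - pose proof (INR_pos1 n); lra.
    - unfold m. intros E. apply (oddne k (n + 1)). revert E. inr. lra.
    - pose proof (INR_pos1 n); lra. }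
  unfold Bm. fold m.
  apply isR_plus. apply isR_plus.
  - apply (isR_fin' (fun i n => fterm m (INR (n + 1)) b i)).
    intros i Hi. unfold fterm. destruct (1 <=? i)%nat eqn:Ei.
    + apply Nat.leb_le in Ei.
      apply isR_ext with (fun n => INR i * 2 ^ (2 * i) * / m ^ (2 * i + 1) * / INR (n + 1) ^ (2 * S b - 2 * i)).
      { intros n. f_equal. pose proof (INR_pos1 n) as HN.
        rewrite <- !pow_mult.
        replace (2 * S b)%nat with (2 * i + (2 * S b - 2 * i))%nat at 2 by lia.
        rewrite pow_add. field. split; apply pow_nonzero; lra. }
      apply isR_scal. apply is_zeta. lia.
    + apply isR_ext with (fun _ => 0). intros; ring. apply isR_zero.
  - apply isR_scal. apply P2ser.
  - apply isR_scal. apply P1ser.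
Qed.

Definition Btot (b : nat) : R :=
  sum_n (fun i => if (1 <=? i)%nat then INR i * 2 ^ (2 * i) * lambda_odd (2 * i + 1) * zeta_R (2 * S b - 2 * i) else 0) b
  + 2 ^ (2 * b) * (2 * lambda_odd 2 * lambda_odd (2 * b + 1) - lambda_odd (2 * b + 3))
  + (1 - 2 * INR (S b)) * 2 ^ (2 * b) * lambda_odd (2 * b + 3).

Lemma B_sum (b : nat) : (1 <= b)%nat -> is_series (Bm b) (Btot b).
Proof.
  intros Hb. unfold Btot.
  apply isR_ext with (fun k =>
    sum_n (fun i => if (1 <=? i)%nat then INR i * 2 ^ (2 * i) * / INR (2 * k + 1) ^ (2 * i + 1) * zeta_R (2 * S b - 2 * i) else 0) b
    + 2 ^ (2 * b) * (2 * lambda_odd 2 * / INR (2 * k + 1) ^ (2 * b + 1) - / INR (2 * k + 1) ^ (2 * b + 3))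
    + (1 - 2 * INR (S b)) * 2 ^ (2 * b) * / INR (2 * k + 1) ^ (2 * b + 3)).
  { intros k. unfold Bm.
    assert (Hm : 0 < INR (2 * k + 1)) by (apply lt_0_INR; lia).
    replace (2 * b + 3)%nat with ((2 * b + 1) + 2)%nat by lia.
    replace (2 * b + 2)%nat with ((2 * b + 1) + 1)%nat by lia.
    rewrite !pow_add. field. split; try lra. apply pow_nonzero; lra. }
  apply isR_plus. apply isR_plus.
  - apply (isR_fin (fun i k => if (1 <=? i)%nat then INR i * 2 ^ (2 * i) * / INR (2 * k + 1) ^ (2 * i + 1) * zeta_R (2 * S b - 2 * i) else 0)).
    intros i. destruct (1 <=? i)%nat eqn:Ei.
    + apply Nat.leb_le in Ei.
      apply isR_ext with (fun k => (INR i * 2 ^ (2 * i) * zeta_R (2 * S b - 2 * i)) * / INR (2 * k + 1) ^ (2 * i + 1)).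
      intros; ring.
      replace (INR i * 2 ^ (2 * i) * lambda_odd (2 * i + 1) * zeta_R (2 * S b - 2 * i)) with
        ((INR i * 2 ^ (2 * i) * zeta_R (2 * S b - 2 * i)) * lambda_odd (2 * i + 1)) by ring.
      apply isR_scal, is_lam. lia.
    + apply isR_zero.
  - apply isR_scal. apply isR_minus. apply isR_scal. apply is_lam; lia. apply is_lam; lia.
  - apply isR_scal. apply is_lam; lia.
Qed.

Theorem mainTheorem7 (a : nat) (ha : (2 <= a)%nat) :
  sigma_odd (2 * a - 1)%nat 2 =
    - INR a * 2 ^ (2 * a - 1) * lambda_odd (2 * a + 1)%nat
    + 2 ^ (2 * a - 1) * INR (2 * a + 1) / 3 * lambda_odd 2 * lambda_odd (2 * a - 1)%nat
    + sum_n (fun i : nat =>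
        if (1 <=? i)%nat then
          INR i * 2 ^ (2 * i) * lambda_odd (2 * i + 1)%nat * zeta_R (2 * a - 2 * i)%nat
        else 0) (a - 2)%nat.
Proof.
  destruct a as [|[|c]]; try lia.
  set (b := S c).
  assert (Hser : is_series (fun n => Sodd 2 (n + 1) / INR (n + 1) ^ (2 * b + 1)) (Btot b)).
  { apply (tonelli (fun k n => T (2 * b) k n) (Bm b)).
    - intros; apply T_nonneg.
    - intros; apply T_m.
    - intros; apply T_n.
    - apply B_sum. unfold b; lia. }
  unfold sigma_odd.
  replace (2 * S b - 1)%nat with (2 * b + 1)%nat by lia.
  rewrite (is_series_unique _ _ Hser).
  replace (S b - 2)%nat with c by (unfold b; lia).
  unfold Btot.
  change (sum_n ?f b) with (sum_n f (S c)).
  rewrite sum_SnR.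
  replace (1 <=? S c)%nat with true by reflexivity.
  replace (2 * S b - 2 * S c)%nat with 2%nat by (unfold b; lia).
  rewrite zeta2_lam2.
  change (S c) with b.
  replace (2 * S b + 1)%nat with (2 * b + 3)%nat by lia.
  replace (2 ^ (2 * b + 1)) with (2 ^ (2 * b) * 2) by (rewrite pow_add; ring).
  replace (INR (2 * b + 3)) with (2 * INR b + 3) by (inr; ring).
  replace (INR (S b)) with (INR b + 1) by (inr; ring).
  set (SS := sum_n _ c). field.
Qed.
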